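(* Let $q=2p$ with $p$ an odd prime. Consider the map $\mathcal S$ sending a pair of integers $(q_1,q_2)$ with $q_1,q_2,q_1+q_2,q_1-q_2$ all $\not\equiv0\pmod q$ to $\mathcal S(q_1,q_2)=(\psi(q_1,q_2),\alpha(q_1,q_2),\beta(q_1,q_2))$. Then $\mathcal S$ takes at most $6$ distinct values.
   Context: Let $\gamma=e^{2\pi i/q}$. Let $A$ be the set of residues in $\{1,\dots,q-1\}$ coprime to $q$, $B=\{2,4,\dots,2(p-1)\}$ and $C=\{p\}$. For $S\subset\{1,\dots,q-1\}$ put $\Pi_S(q_1,q_2)(z)=\sum_{l\in S}\prod_{i=1}^{2}(z-\gamma^{q_il})(z-\gamma^{-q_il})$; then $\psi=\Pi_A$, $\alpha=\Pi_B$, $\beta=\Pi_C$. *)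

(* Defs.v *)
From HB Require Import structures.
From mathcomp Require Import all_boot all_order all_algebra all_field.
Set Implicit Arguments. Unset Strict Implicit. Unset Printing Implicit Defensive.
Import Order.TTheory GRing.Theory Num.Theory.
Local Open Scope ring_scope.

(* gamma = exp(2 pi i / q) with q = 2p, i.e. exp(i pi / p): the principal
   p-th root of -1 in algC (minimal nonnegative argument). *)
Definition gam (p : nat) : algC := p.-root (-1).

Definition PiS (p : nat) (S : seq nat) (q1 q2 : int) : {poly algC} :=
  \sum_(l <- S) \prod_(qi <- [:: q1; q2])
     (('X - (gam p ^ (qi * l%:Z))%:P) * ('X - (gam p ^ (- (qi * l%:Z)))%:P)).

Definition setA (p : nat) : seq nat := [seq l <- iota 1 (2 * p - 1) | coprime l (2 * p)].
Definition setB (p : nat) : seq nat := [seq (2 * k)%N | k <- iota 1 (p - 1)].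
Definition setC (p : nat) : seq nat := [:: p].

Definition psi p q1 q2 := PiS p (setA p) q1 q2.
Definition alpha p q1 q2 := PiS p (setB p) q1 q2.
Definition beta p q1 q2 := PiS p (setC p) q1 q2.

Definition Smap (p : nat) (q1 q2 : int) : {poly algC} * {poly algC} * {poly algC} :=
  (psi p q1 q2, alpha p q1 q2, beta p q1 q2).

(* Main.v *)
Require Import Defs.
From HB Require Import structures.
From mathcomp Require Import all_boot all_order all_algebra all_field.
Import Order.TTheory GRing.Theory Num.Theory.
Local Open Scope ring_scope.

Lemma N1_neq1 : (-1 : algC) != 1.
Proof. by rewrite lt_eqF // (lt_trans (ltrN10 _) ltr01). Qed.

Lemma gam_p (p : nat) : (0 < p)%N -> gam p ^+ p = -1.
Proof. by move=> hp; rewrite /gam rootCK. Qed.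

Lemma gam_prim p : prime p -> odd p -> (2 * p)%N.-primitive_root (gam p).
Proof.
move=> hp hodd; have p0 : (0 < p)%N := prime_gt0 hp.
have gp := gam_p p p0.
have g2p : gam p ^+ (2 * p) = 1 by rewrite mulnC exprM gp sqrrN expr1n.
have [m pm mdv] := prim_order_exists (n := (2 * p)%N) (ltac:(by rewrite muln_gt0 p0)) g2p.
have npm : ~~ (m %| p)%N by rewrite (prim_order_dvd pm) gp N1_neq1.
have n2m : ~~ (m %| 2)%N.
  rewrite (prim_order_dvd pm) sqrf_eq1; apply/norP; split.
    by apply/eqP=> g1; move: gp; rewrite g1 expr1n => /eqP; rewrite eq_sym (negPf N1_neq1).
  apply/eqP=> g1; have h := @rootC_lt0 algC p (-1) (prime_gt1 hp).
  by move: h; rewrite -/(gam p) g1 ltrN10.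
suff e : m = (2 * p)%N by rewrite -e.
have pdm : (p %| m)%N.
  apply: contraR n2m => npd; have cp' : coprime m p by rewrite coprime_sym prime_coprime.
  by rewrite -(Gauss_dvdl 2 (cp' : coprime m p)).
have [k km] := dvdnP pdm; rewrite km in mdv npm *.
move: mdv; rewrite dvdn_pmul2r // => k2. idtac.
case: k k2 npm {km} => [|[|[|k]]] //; first by rewrite mul1n dvdnn.

Qed.

Lemma geom0 (w : algC) n : w ^+ n = 1 -> w != 1 -> \sum_(0 <= k < n) w ^+ k = 0.
Proof.
move=> wn w1; have := subrX1 w n; rewrite wn subrr big_mkord.
move/esym/eqP; rewrite mulf_eq0 subr_eq0 (negPf w1) /= => /eqP ->. by [].
Qed.

Lemma pm1 (x : algC) : x ^+ 2 = 1 -> x = if x == 1 then 1 else -1.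
Proof. by move=> /eqP; rewrite sqrf_eq1; case: eqP => //= _ /eqP. Qed.

Lemma EC_val (u : algC) p : u ^+ (2 * p) = 1 ->
  \sum_(l <- [:: p]) u ^+ l = if u ^+ p == 1 then 1 else -1.
Proof.
move=> h; rewrite big_seq1; apply: pm1; by rewrite -exprM mulnC.
Qed.

Lemma EB_val (u : algC) p : (0 < p)%N -> u ^+ (2 * p) = 1 ->
  \sum_(l <- setB p) u ^+ l = if u ^+ 2 == 1 then (p - 1)%:R else -1.
Proof.
move=> p0 h; rewrite /setB big_map.
under eq_bigr do rewrite exprM.
have -> : iota 1 (p - 1) = index_iota 1 p by [].
case: eqP => [->|w1].
  by under eq_bigr do rewrite expr1n; rewrite sumr_const_nat.
have := @geom0 (u ^+ 2) p; rewrite -exprM h => /(_ erefl).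
move/(_ (introN eqP w1)) => H; rewrite big_ltn // expr0 in H.
by apply/eqP; rewrite -addr_eq0 addrC H.
Qed.

Lemma odd_sum (u : algC) n :
  \sum_(0 <= l < 2 * n) (if odd l then u ^+ l else 0)
  = u * \sum_(0 <= j < n) (u ^+ 2) ^+ j.
Proof.
elim: n => [|n IH]; first by rewrite muln0 !big_geq // mulr0.
rewrite mulnSr addn2 !big_nat_recr //= IH /= oddM /=.
rewrite addr0 mulrDr; congr (_ + _).
by rewrite -exprM exprS.
Qed.

Lemma coprime_case p l : prime p -> odd p -> (l < 2 * p)%N ->
  coprime l (2 * p) = odd l && (l != p).
Proof.
move=> hp hodd hl; rewrite coprimeMr coprime_sym coprime2n coprime_sym prime_coprime //.
case: eqP => [->|nl]; first by rewrite dvdnn andbF.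
rewrite andbT; case ol: (odd l) => //=; apply/negP => /dvdnP [k ek].
move: hl ol; rewrite ek ltn_pmul2r ?prime_gt0 //.
case: k ek => [|[|k]] ek //; first by move=> _ _; apply: nl; rewrite ek mul1n.
Qed.

Lemma EA_val (u : algC) p : prime p -> odd p -> u ^+ (2 * p) = 1 ->
  ~~ ((u ^+ 2 == 1) && (u ^+ p == 1)) ->
  \sum_(l <- setA p) u ^+ l =
    if u ^+ 2 == 1 then 1 - p%:R else if u ^+ p == 1 then -1 else 1.
Proof.
move=> hp hodd h nn; have p0 := prime_gt0 hp.
rewrite /setA big_filter.
have -> : iota 1 (2 * p - 1) = index_iota 1 (2 * p) by [].
rewrite big_mkcond.
have e0 : \sum_(1 <= l < 2 * p) (if coprime l (2 * p) then u ^+ l else 0)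
        = \sum_(0 <= l < 2 * p) (if coprime l (2 * p) then u ^+ l else 0).
  have h1 : (2 * p == 1)%N = false by rewrite muln_eq1.
  by rewrite [RHS]big_ltn ?muln_gt0 ?p0 // /coprime gcd0n h1 add0r.
rewrite e0 (eq_big_nat _ _ (F2 := fun l => (if odd l then u ^+ l else 0)
                     - (if l == p then u ^+ l else 0))); last first.
  move=> i /andP [_ hi]; rewrite coprime_case //.
  case: eqP => [->|_]; first by rewrite hodd andbF subrr.
  by rewrite andbT subr0.
rewrite sumrB [X in _ - X](bigD1_seq p) ?mem_index_iota ?iota_uniq //=; last first.
  by rewrite -{1}(mul1n p) ltn_pmul2r.
rewrite eqxx [X in u ^+ p + X]big1 ?addr0; last by move=> i /negPf ->.
rewrite odd_sum.
have up2 : (u ^+ p) ^+ 2 = 1 by rewrite -exprM mulnC.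
have up := @pm1 _ up2.
case: (u ^+ 2 =P 1) => [w1|w1].
  under eq_bigr do rewrite w1 expr1n.
  rewrite sumr_const_nat subn0.
  rewrite w1 eqxx /= in nn; rewrite (negPf nn) in up.
  have upu : u ^+ p = u.
    by rewrite -{1}(odd_double_half p) hodd -mul2n exprD exprM w1 expr1n mulr1 expr1.
  have um : u = -1 by rewrite -upu.
  by rewrite upu um mulN1r opprK addrC.
rewrite (@geom0 (u ^+ 2) p) ?mulr0 ?sub0r; last 2 first.
    by rewrite -exprM.
  by apply/eqP.
by rewrite {1}up; case: eqP => //; rewrite opprK.
Qed.

Lemma quad_id (R : comPzRingType) (x a b : R) :
  (x - a) * (x - b) = x ^+ 2 + a * b - (a + b) * x.
Proof.
rewrite mulrBl !mulrBr opprB expr2 mulrDl (mulrC x b).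
by rewrite addrACA opprD [- (b * x) + _]addrC.
Qed.

Lemma quart_id (R : comPzRingType) (y x s t : R) :
  (y - s * x) * (y - t * x) = y * y - (s + t) * (x * y) + (s * t) * x ^+ 2.
Proof.
rewrite quad_id mulrACA -mulrDl -mulrA -expr2 addrAC.
by rewrite [y ^+ 2]expr2 -mulrA.
Qed.

Definition Cz p (m : int) : algC := gam p ^ m + gam p ^ (- m).
Definition TS p (S : seq nat) (m : int) : algC := \sum_(l <- S) Cz p (m * l%:Z).
Definition Yp : {poly algC} := 'X ^+ 2 + 1.
Definition Qp (S : seq nat) (a b : algC) : {poly algC} :=
  \sum_(l <- S) (Yp * Yp) - a%:P * ('X * Yp) + b%:P * 'X ^+ 2.

Lemma fac2 (a : algC) : a != 0 ->
  ('X - a%:P) * ('X - (a^-1)%:P) = Yp - (a + a^-1)%:P * 'X.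
Proof. by move=> a0; rewrite quad_id -polyCM mulfV // polyCD. Qed.

Lemma Cz_mul p m n : gam p != 0 -> Cz p m * Cz p n = Cz p (m + n) + Cz p (m - n).
Proof.
move=> g0; have ug : gam p \is a GRing.unit by rewrite unitfE.
rewrite /Cz mulrDl !mulrDr !exprzDr // opprD opprB !exprzDr //.
rewrite addrACA [gam p ^ n * _]mulrC.
set A := gam p ^ m * gam p ^ n; set B := gam p ^ m * gam p ^ (- n).
set C := gam p ^ (- m) * gam p ^ n; set D := gam p ^ (- m) * gam p ^ (- n).
by rewrite [B + D]addrC [B + C]addrC [LHS]addrACA.
Qed.

Lemma PiS_eq p S q1 q2 : gam p != 0 ->
  PiS p S q1 q2 = Qp S (TS p S q1 + TS p S q2) (TS p S (q1 + q2) + TS p S (q1 - q2)).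
Proof.
move=> g0; rewrite /PiS.
under eq_bigr => l _.
  rewrite big_cons big_seq1 -!invr_expz !fac2 ?expfz_neq0 // !invr_expz quart_id.
  rewrite -polyCD -polyCM -/(Cz p (q1 * l%:Z)) -/(Cz p (q2 * l%:Z)).
  rewrite Cz_mul // -mulrDl -mulrBl.
  over.
rewrite big_split sumrB /= /Qp /TS -!big_split /= !rmorph_sum !mulr_suml.
by [].
Qed.

Lemma gamz_eq1 p : prime p -> odd p -> forall z : int,
  (gam p ^ z == 1) = ((2 * p)%:Z %| z)%Z.
Proof.
move=> hp hodd z; have pr := gam_prim p hp hodd.
case: z => n.
  by rewrite -exprnP dvdzE /= -(prim_order_dvd pr).
rewrite NegzE -invr_expz invr_eq1 -exprnP dvdzE abszN /= -(prim_order_dvd pr).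
by [].
Qed.

Lemma powm p (m : int) (k : nat) : (gam p ^ m) ^+ k = gam p ^ (m * k%:Z).
Proof. by rewrite exprnP exprz_exp. Qed.

Lemma divN p m : prime p -> ((2 * p)%:Z %| m * (2 * p)%:Z)%Z.
Proof. by move=> _; apply: dvdz_mull. Qed.

Lemma div_p p m : prime p -> ((2 * p)%:Z %| m * p%:Z)%Z = (2 %| m)%Z.
Proof.
move=> hp; rewrite PoszM dvdz_mul2r //.
by rewrite eqz_nat -lt0n prime_gt0.
Qed.

Lemma div_2 p m : prime p -> ((2 * p)%:Z %| m * 2)%Z = (p%:Z %| m)%Z.
Proof. by move=> hp; rewrite mulnC PoszM dvdz_mul2r. Qed.

Definition key p (m : int) : bool * bool := ((2 %| m)%Z, (p%:Z %| m)%Z).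
Definition EAv p (k : bool * bool) : algC := if k.2 then 1 - p%:R else if k.1 then -1 else 1.
Definition EBv p (k : bool * bool) : algC := if k.2 then (p - 1)%:R else -1.
Definition ECv (k : bool * bool) : algC := if k.1 then 1 else -1.

Lemma not_both p m : prime p -> odd p -> ~~ ((2 * p)%:Z %| m)%Z ->
  ~~ ((2 %| m)%Z && (p%:Z %| m)%Z).
Proof.
move=> hp hodd; apply: contra; rewrite PoszM Gauss_dvdz //.
by rewrite coprimezE /= coprime2n.
Qed.

Section Vals.
Variables (p : nat) (hp : prime p) (hodd : odd p) (m : int).
Hypothesis hm : ~~ ((2 * p)%:Z %| m)%Z.
Let u := gam p ^ m.
Let uN : u ^+ (2 * p) = 1.
Proof. by apply/eqP; rewrite /u powm gamz_eq1 // divN. Qed.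
Let up : (u ^+ p == 1) = (2 %| m)%Z.
Proof. by rewrite /u powm gamz_eq1 // div_p. Qed.
Let u2 : (u ^+ 2 == 1) = (p%:Z %| m)%Z.
Proof. by rewrite /u powm gamz_eq1 // div_2. Qed.

Lemma ESA : \sum_(l <- setA p) u ^+ l = EAv p (key p m).
Proof.
rewrite EA_val // ?u2 ?up //; rewrite andbC; exact: (@not_both p m hp hodd hm).
Qed.

Lemma ESB : \sum_(l <- setB p) u ^+ l = EBv p (key p m).
Proof. by rewrite EB_val ?prime_gt0 // u2. Qed.

Lemma ESC : \sum_(l <- Defs.setC p) u ^+ l = ECv (key p m).
Proof. by rewrite EC_val // up. Qed.
End Vals.

Lemma TS_key p S (f : bool * bool -> algC) m :
  (forall m', ~~ ((2 * p)%:Z %| m')%Z -> \sum_(l <- S) (gam p ^ m') ^+ l = f (key p m')) ->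
  ~~ ((2 * p)%:Z %| m)%Z -> TS p S m = f (key p m) + f (key p m).
Proof.
move=> H hm; rewrite /TS /Cz big_split /=.
have e1 l : gam p ^ (m * l%:Z) = (gam p ^ m) ^+ l by rewrite powm.
have e2 l : gam p ^ (- (m * l%:Z)) = (gam p ^ (- m)) ^+ l by rewrite powm mulNr.
rewrite (eq_bigr _ (fun l _ => e1 l)) (eq_bigr _ (fun l _ => e2 l)).
rewrite H // H ?rpredN //.
by rewrite /key !rpredN.
Qed.

Lemma nd2 (x : int) : ~~ (2 %| x)%Z -> (2 %| x - 1)%Z.
Proof.
move=> h; have r0 : (x %% 2)%Z != 0.
  by apply: contra h => /eqP /dvdz_mod0P.
have lo := @modz_ge0 x 2 isT.
have hi := @ltz_pmod x 2 isT.
have r1 : (x %% 2)%Z = 1.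
  by move: r0 lo hi; case: (x %% 2)%Z => [[|[|k]]|k].
rewrite {1}(divz_eq x 2) r1 addrK; apply: dvdz_mull; exact: dvdzz.
Qed.

Lemma ev_add (x y : int) : (2 %| x + y)%Z = ((2 %| x)%Z == (2 %| y)%Z).
Proof.
case hx: (2 %| x)%Z; first by rewrite rpredDl.
case hy: (2 %| y)%Z; first by rewrite rpredDr // hx.
have -> : x + y = (x - 1 + (y - 1)) + (1 + 1).
  by rewrite [x - 1 + (y - 1)]addrACA -opprD subrK.
rewrite /= rpredD //; apply: rpredD; apply: nd2; exact: negbT.
Qed.

Lemma ev_sub (x y : int) : (2 %| x - y)%Z = ((2 %| x)%Z == (2 %| y)%Z).
Proof. by rewrite ev_add rpredN. Qed.

Lemma twice (x : int) : x + x = x * 2.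
Proof. by rewrite (_ : 2 = 1 + 1) // mulrDr mulr1. Qed.

Definition Qf S (f : bool * bool -> algC) k1 k2 k3 k4 :=
  Qp S ((f k1 + f k1) + (f k2 + f k2)) ((f k3 + f k3) + (f k4 + f k4)).

Definition W p k1 k2 k3 k4 :=
  (Qf (setA p) (EAv p) k1 k2 k3 k4, Qf (setB p) (EBv p) k1 k2 k3 k4,
   Qf (Defs.setC p) ECv k1 k2 k3 k4).

Lemma Qf12 S f k1 k2 k3 k4 : Qf S f k1 k2 k3 k4 = Qf S f k2 k1 k3 k4.
Proof. by rewrite /Qf [X in Qp _ X _]addrC. Qed.

Lemma Qf34 S f k1 k2 k3 k4 : Qf S f k1 k2 k3 k4 = Qf S f k1 k2 k4 k3.
Proof. by rewrite /Qf [X in Qp _ _ X]addrC. Qed.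

Lemma W12 p k1 k2 k3 k4 : W p k1 k2 k3 k4 = W p k2 k1 k3 k4.
Proof. by rewrite /W !(Qf12 _ _ k1). Qed.

Lemma W34 p k1 k2 k3 k4 : W p k1 k2 k3 k4 = W p k1 k2 k4 k3.
Proof. by rewrite /W !(Qf34 _ _ _ _ k3). Qed.

Definition kE := (true, false).
Definition kP := (false, true).
Definition kO := (false, false).
Definition L6 : seq ((bool * bool * (bool * bool)) * (bool * bool * (bool * bool))) :=
  [:: ((kE, kE), (kE, kE)); ((kE, kP), (kO, kO)); ((kE, kO), (kP, kO));
      ((kE, kO), (kO, kO)); ((kP, kO), (kE, kE)); ((kO, kO), (kE, kE))].

Definition vs6 p := [seq W p t.1.1 t.1.2 t.2.1 t.2.2 | t <- L6].

Lemma W_in p k1 k2 k3 k4 :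
  [|| ((k1, k2), (k3, k4)) \in L6, ((k2, k1), (k3, k4)) \in L6,
      ((k1, k2), (k4, k3)) \in L6 | ((k2, k1), (k4, k3)) \in L6] ->
  W p k1 k2 k3 k4 \in vs6 p.
Proof.
case/or4P => H; [ | rewrite W12 | rewrite W34 | rewrite W12 W34];
  exact: (map_f (fun t => W p t.1.1 t.1.2 t.2.1 t.2.2) H).
Qed.

Lemma comb (a b c d e f : bool) :
  ~~ (a && c) -> ~~ (b && d) -> ~~ ((a == b) && e) -> ~~ ((a == b) && f) ->
  (c && d ==> e) -> (c && e ==> d) -> (d && e ==> c) ->
  (c && d ==> f) -> (c && f ==> d) -> (d && f ==> c) -> (e && f ==> c) ->
  [|| (((a, c), (b, d)), ((a == b, e), (a == b, f))) \in L6,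
      (((b, d), (a, c)), ((a == b, e), (a == b, f))) \in L6,
      (((a, c), (b, d)), ((a == b, f), (a == b, e))) \in L6
    | (((b, d), (a, c)), ((a == b, f), (a == b, e))) \in L6].
Proof. by case: a; case: b; case: c; case: d; case: e; case: f. Qed.

Lemma gam_neq0 p : prime p -> gam p != 0.
Proof.
move=> hp; apply/eqP=> g0; have := gam_p p (prime_gt0 hp).
rewrite g0 expr0n gtn_eqF ?prime_gt0 // => /eqP; rewrite eq_sym oppr_eq0.
by rewrite oner_eq0.
Qed.

Lemma Smap_W p q1 q2 : prime p -> odd p ->
  ~~ ((2 * p)%:Z %| q1)%Z -> ~~ ((2 * p)%:Z %| q2)%Z ->
  ~~ ((2 * p)%:Z %| q1 + q2)%Z -> ~~ ((2 * p)%:Z %| q1 - q2)%Z ->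
  Smap p q1 q2 = W p (key p q1) (key p q2) (key p (q1 + q2)) (key p (q1 - q2)).
Proof.
move=> hp hodd h1 h2 h3 h4; have g0 := gam_neq0 p hp.
rewrite /Smap /psi /alpha /beta !PiS_eq //.
have hA m : ~~ ((2 * p)%:Z %| m)%Z -> TS p (setA p) m = EAv p (key p m) + EAv p (key p m).
  by apply: TS_key => m' hm'; apply: ESA.
have hB m : ~~ ((2 * p)%:Z %| m)%Z -> TS p (setB p) m = EBv p (key p m) + EBv p (key p m).
  by apply: TS_key => m' hm'; apply: ESB.
have hC m : ~~ ((2 * p)%:Z %| m)%Z -> TS p (Defs.setC p) m = ECv (key p m) + ECv (key p m).
  by apply: TS_key => m' hm'; apply: ESC.
by rewrite !hA // !hB // !hC.
Qed.

Theorem proposition3p1p5 (p : nat) (hp : prime p) (hodd : odd p) :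
  exists vs : seq ({poly algC} * {poly algC} * {poly algC}),
    (size vs <= 6)%N /\
    forall q1 q2 : int,
      ~~ ((2 * p)%:Z %| q1)%Z -> ~~ ((2 * p)%:Z %| q2)%Z ->
      ~~ ((2 * p)%:Z %| q1 + q2)%Z -> ~~ ((2 * p)%:Z %| q1 - q2)%Z ->
      Smap p q1 q2 \in vs.
Proof.
exists (vs6 p); split; first by [].
move=> q1 q2 h1 h2 h3 h4; rewrite Smap_W //.
have n1 := @not_both p q1 hp hodd h1.
have n2 := @not_both p q2 hp hodd h2.
have n3 := @not_both p (q1 + q2) hp hodd h3.
have n4 := @not_both p (q1 - q2) hp hodd h4.
rewrite /key ev_add ev_sub; rewrite ev_add in n3; rewrite ev_sub in n4.
apply: W_in; apply: comb => //.
- by apply/implyP => /andP [hc hd]; apply: rpredD.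
- by apply/implyP => /andP [hc he]; rewrite -(rpredDl q2 hc).
- by apply/implyP => /andP [hd he]; rewrite -(rpredDr q1 hd).
- by apply/implyP => /andP [hc hd]; apply: rpredB.
- by apply/implyP => /andP [hc hf]; rewrite -rpredN -(rpredDl (- q2) hc).
- apply/implyP => /andP [hd hf]; have hd' : (- q2 \in dvdz p) by rewrite rpredN.
  by rewrite -(rpredDr q1 hd').
- apply/implyP => /andP [he hf]; have := rpredD he hf.
  rewrite addrACA subrr addr0 twice Gauss_dvdzl //.
  by rewrite coprimezE /= coprime_sym coprime2n.
Qed.
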